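(* Let $(X,\mathrm{dist})$ be a metric space, $\Sigma$ a metric space, and $\{U_\sigma(t,\tau)\}_{\sigma\in\Sigma}$ a family of processes on $X$. Then: (i) $A^\star_\Sigma$ is contained in every closed uniformly attracting set. (ii) For every bounded set $C\subset X$, $\omega_\Sigma(C)\subset A^\star_\Sigma$; moreover $A^\star_\Sigma=\bigcup\omega_\Sigma(C)$, the union taken over all bounded sets $C\subset X$. (iii) If the family is uniformly dissipative, then for every bounded uniformly absorbing set $B$ and every bounded set $C$ we have $\omega_\Sigma(C)\subset\omega_\Sigma(B)=A^\star_\Sigma$; in particular $A^\star_\Sigma$ is closed in $X$.
   Context: A process on $X$ is a family of maps $U(t,\tau):X\to X$, indexed by reals $t\ge\tau$, with $U(\tau,\tau)=\mathrm{id}_X$ and $U(t,\tau)=U(t,s)U(s,\tau)$ for $t\ge s\ge\tau$; no continuity is assumed. For nonempty $B,C\subset X$, $\delta_X(B,C)=\sup_{x\in B}\inf_{\xi\in C}\mathrm{dist}(x,\xi)$. A set $K\subset X$ is uniformly attracting if for every bounded $C\subset X$, $\lim_{t-\tau\to\infty}\sup_{\sigma\in\Sigma}\delta_X(U_\sigma(t,\tau)C,K)=0$. A set $B\subset X$ is uniformly absorbing if for every bounded $C\subset X$ there is $t_e=t_e(C)$ with $U_\sigma(t,\tau)C\subset B$ for all $\sigma\in\Sigma$ whenever $t-\tau\ge t_e$. The family is uniformly dissipative if it has a bounded uniformly absorbing set. $\mathfrak{C}_\Sigma$ is the collection of all sequences $y_n=U_{\sigma_n}(t_n,\tau_n)x_n$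 with $x_n$ a bounded sequence in $X$, $\sigma_n\in\Sigma$, $t_n-\tau_n\to\infty$. For $y_n\in\mathfrak{C}_\Sigma$, $L_\Sigma(y_n)=\{x\in X: y_n\to x \text{ along some subsequence}\}$. $A^\star_\Sigma=\{x\in X: y_n\to x$ along a subsequence, for some $y_n\in\mathfrak{C}_\Sigma\}$. For bounded $C\subset X$, $\omega_\Sigma(C)=\bigcap_{h\ge0}\overline{\bigcup_{\sigma\in\Sigma}\bigcup_{t-\tau\ge h}U_\sigma(t,\tau)C}$ (closure in $X$). These sets may be empty. *)

(* Defs.v *)
From Stdlib Require Import Reals.
Open Scope R_scope.

Record MetricSpace := {
  carrier :> Type;
  dist : carrier -> carrier -> R;
  dist_nonneg : forall x y, 0 <= dist x y;
  dist_eq0 : forall x y, dist x y = 0 <-> x = y;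
  dist_sym : forall x y, dist x y = dist y x;
  dist_tri : forall x y z, dist x z <= dist x y + dist y z
}.

Section Defs.
Variable X : MetricSpace.
Variable Sigma : Type.
Variable U : Sigma -> R -> R -> X -> X.  (* U sigma t tau *)

(* each U sigma is a process (no continuity assumed) *)
Definition is_process_family : Prop :=
  forall s : Sigma,
    (forall tau x, U s tau tau x = x) /\
    (forall t r tau x, r <= t -> tau <= r -> U s t tau x = U s t r (U s r tau x)).

Definition mbounded (C : X -> Prop) : Prop :=
  exists x0 : X, exists r : R, forall x, C x -> dist X x0 x <= r.

Definition mclosure (S : X -> Prop) : X -> Prop :=
  fun x => forall eps, 0 < eps -> exists y, S y /\ dist X x y < eps.

Definition mclosed (S : X -> Prop) : Prop := forall x, mclosure S x -> S x.

(* lim_{t-tau -> oo} sup_sigma delta_X(U_sigma(t,tau) C, K) = 0, written out *)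
Definition unif_attracting (K : X -> Prop) : Prop :=
  forall C, mbounded C ->
  forall eps, 0 < eps -> exists T : R, forall (s : Sigma) t tau, t - tau >= T ->
    forall x, C x -> exists xi, K xi /\ dist X (U s t tau x) xi < eps.

Definition unif_absorbing (B : X -> Prop) : Prop :=
  forall C, mbounded C -> exists te : R, forall (s : Sigma) t tau, t - tau >= te ->
    forall x, C x -> B (U s t tau x).

Definition unif_dissipative : Prop :=
  exists B, mbounded B /\ unif_absorbing B.

Definition seq_converges (y : nat -> X) (l : X) : Prop :=
  forall eps, 0 < eps -> exists N, forall n, (n >= N)%nat -> dist X (y n) l < eps.

Definition subseq_converges (y : nat -> X) (l : X) : Prop :=
  exists phi : nat -> nat, (forall n, (phi n < phi (S n))%nat) /\
    seq_converges (fun n => y (phi n)) l.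

Definition in_CSigma (y : nat -> X) : Prop :=
  exists (x : nat -> X) (s : nat -> Sigma) (t tau : nat -> R),
    mbounded (fun z => exists n, z = x n) /\
    (forall M, exists N, forall n, (n >= N)%nat -> t n - tau n >= M) /\
    (forall n, y n = U (s n) (t n) (tau n) (x n)).

Definition L_Sigma (y : nat -> X) : X -> Prop := fun l => subseq_converges y l.

Definition Astar : X -> Prop :=
  fun l => exists y, in_CSigma y /\ L_Sigma y l.

Definition omega (C : X -> Prop) : X -> Prop :=
  fun l => forall h, 0 <= h ->
    mclosure (fun z => exists (s : Sigma) t tau x,
                t - tau >= h /\ C x /\ z = U s t tau x) l.
End Defs.

(* Main.v *)
Require Import Defs.
From Stdlib Require Import Reals Lra Lia ClassicalEpsilon.
Open Scope R_scope.

Lemma nat_big (A : R) : exists N : nat, A < INR N.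
Proof. destruct (INR_archimed 1 A) as [n Hn]; [lra|]. exists n; lra. Qed.

Lemma inv_small (eps : R) : 0 < eps -> exists N : nat, forall n, (n >= N)%nat -> / (INR n + 1) < eps.
Proof.
  intros He. destruct (nat_big (/ eps)) as [N HN]. exists N. intros n Hn.
  apply le_INR in Hn. assert (0 < / eps) by (apply Rinv_0_lt_compat; lra).
  assert (/ eps < INR n + 1) by lra.
  replace eps with (/ / eps) by (field; lra).
  apply Rinv_lt_contravar; [|lra]. apply Rmult_lt_0_compat; lra.
Qed.

Section S.
Variable X : MetricSpace.
Variable Sig : MetricSpace.
Variable U : Sig -> R -> R -> X -> X.

Lemma omega_Astar C : mbounded X C -> forall x, omega X Sig U C x -> Astar X Sig U x.
Proof.
  intros HC x Hx.
  assert (H : forall n : nat, exists p : Sig * R * R * X,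
    snd (fst (fst p)) - snd (fst p) >= INR n /\ C (snd p) /\
    Defs.dist X x (U (fst (fst (fst p))) (snd (fst (fst p))) (snd (fst p)) (snd p)) < / (INR n + 1)).
  { intro n. destruct (Hx (INR n) (pos_INR n) (/ (INR n + 1))) as [z [[s [t [tau [x' [H1 [H2 H3]]]]]] Hd]].
    { apply Rinv_0_lt_compat. pose proof (pos_INR n); lra. }
    exists (s, t, tau, x'). simpl. subst z. auto. }
  set (f := fun n => proj1_sig (constructive_indefinite_description _ (H n))).
  assert (Hf : forall n, let p := f n in snd (fst (fst p)) - snd (fst p) >= INR n /\ C (snd p) /\
    Defs.dist X x (U (fst (fst (fst p))) (snd (fst (fst p))) (snd (fst p)) (snd p)) < / (INR n + 1)).
  { intro n. exact (proj2_sig (constructive_indefinite_description _ (H n))). }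
  exists (fun n => U (fst (fst (fst (f n)))) (snd (fst (fst (f n)))) (snd (fst (f n))) (snd (f n))).
  split.
  - exists (fun n => snd (f n)), (fun n => fst (fst (fst (f n)))),
      (fun n => snd (fst (fst (f n)))), (fun n => snd (fst (f n))).
    split; [|split; [|reflexivity]].
    + destruct HC as [x0 [r Hr]]. exists x0, r. intros z [n ->]. apply Hr, (Hf n).
    + intro M. destruct (nat_big M) as [N HN]. exists N. intros n Hn.
      destruct (Hf n) as [H1 _]. apply le_INR in Hn. simpl in H1. lra.
  - exists (fun n => n). split; [intros; lia|].
    intros eps He. destruct (inv_small eps He) as [N HN]. exists N. intros n Hn.
    destruct (Hf n) as [_ [_ H3]]. simpl in H3. rewrite Defs.dist_sym.
    specialize (HN n Hn). lra.
Qed.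

Lemma Astar_omega x : Astar X Sig U x -> exists C, mbounded X C /\ omega X Sig U C x.
Proof.
  intros [y [[xs [s [t [tau [Hb [Ht Hy]]]]]] [phi [Hphi Hc]]]].
  exists (fun z => exists n, z = xs n). split; [exact Hb|].
  intros h Hh eps He.
  destruct (Ht h) as [N1 HN1]. destruct (Hc eps He) as [N2 HN2].
  assert (Hge : forall n, (phi n >= n)%nat).
  { induction n; [lia|]. specialize (Hphi n). lia. }
  set (n := Nat.max N1 N2).
  exists (y (phi n)). split.
  - exists (s (phi n)), (t (phi n)), (tau (phi n)), (xs (phi n)).
    split; [apply HN1; specialize (Hge n); lia|]. split; [eauto|apply Hy].
  - rewrite Defs.dist_sym. apply HN2. lia.
Qed.

Lemma closure_closed (S : X -> Prop) : mclosed X (mclosure X S).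
Proof.
  intros x Hx eps He.
  destruct (Hx (eps/2)) as [y [Hy Hd]]; [lra|].
  destruct (Hy (eps/2)) as [z [Hz Hd2]]; [lra|].
  exists z. split; auto. pose proof (Defs.dist_tri X x y z). lra.
Qed.

Lemma omega_closed C : mclosed X (omega X Sig U C).
Proof.
  intros x Hx h Hh. apply closure_closed.
  intros eps He. destruct (Hx eps He) as [y [Hy Hd]]. exists y. split; auto.
Qed.
End S.

Theorem lemma2p6 (X : MetricSpace) (Sig : MetricSpace)
  (U : Sig -> R -> R -> X -> X) (HU : is_process_family X Sig U) :
  (* (i) *)
  (forall K : X -> Prop, mclosed X K -> unif_attracting X Sig U K ->
     forall x, Astar X Sig U x -> K x) /\
  (* (ii) *)
  (forall C : X -> Prop, mbounded X C ->
     forall x, omega X Sig U C x -> Astar X Sig U x) /\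
  (forall x, Astar X Sig U x <-> exists C, mbounded X C /\ omega X Sig U C x) /\
  (* (iii) *)
  (unif_dissipative X Sig U ->
     (forall B : X -> Prop, mbounded X B -> unif_absorbing X Sig U B ->
        forall C : X -> Prop, mbounded X C ->
          (forall x, omega X Sig U C x -> omega X Sig U B x) /\
          (forall x, omega X Sig U B x <-> Astar X Sig U x)) /\
     mclosed X (Astar X Sig U)).
Proof.
  assert (Hsub : forall B, mbounded X B -> unif_absorbing X Sig U B ->
            forall C, mbounded X C -> forall x, omega X Sig U C x -> omega X Sig U B x).
  { intros B HB HabsB C HC x Hx h Hh eps He.
    destruct (HabsB C HC) as [te Hte].
    set (m := Rmax te 0).
    assert (Hm1 : te <= m) by apply Rmax_l. assert (Hm2 : 0 <= m) by apply Rmax_r.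
    destruct (Hx (h + m) ltac:(lra) eps He) as [z [[s [t [tau [x' [H1 [H2 H3]]]]]] Hd]].
    exists z. split; auto.
    exists s, t, (tau + m), (U s (tau + m) tau x'). split; [lra|]. split.
    - apply Hte; auto. lra.
    - subst z. apply (proj2 (HU s)); lra. }
  split; [|split; [|split]].
  - intros K HK Hatt x [y [[xs [s [t [tau [Hb [Ht Hy]]]]]] [phi [Hphi Hc]]]].
    apply HK. intros eps He.
    destruct (Hatt _ Hb (eps/2)) as [T HT]; [lra|].
    destruct (Ht T) as [N1 HN1]. destruct (Hc (eps/2)) as [N2 HN2]; [lra|].
    assert (Hge : forall n, (phi n >= n)%nat).
    { induction n; [lia|]. specialize (Hphi n). lia. }
    set (n := Nat.max N1 N2).
    destruct (HT (s (phi n)) (t (phi n)) (tau (phi n))) with (x := xs (phi n))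
      as [xi [Hxi Hd]].
    { apply HN1. specialize (Hge n). lia. }
    { eauto. }
    exists xi. split; auto.
    specialize (HN2 n ltac:(lia)). simpl in HN2. rewrite Hy in HN2.
    pose proof (Defs.dist_tri X x (U (s (phi n)) (t (phi n)) (tau (phi n)) (xs (phi n))) xi).
    rewrite Defs.dist_sym in HN2. lra.
  - apply omega_Astar.
  - intro x. split; [apply Astar_omega|]. intros [C [HC Hx]]. eapply omega_Astar; eauto.
  - intros [B0 [HB0 Habs0]].
    assert (Heq : forall B, mbounded X B -> unif_absorbing X Sig U B ->
               forall x, omega X Sig U B x <-> Astar X Sig U x).
    { intros B HB Habs x. split; [apply omega_Astar; auto|].
      intros Hx. destruct (Astar_omega _ _ _ x Hx) as [C [HC HxC]].
      eapply Hsub; eauto. }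
    split.
    + intros B HB Habs C HC. split; [eapply Hsub; eauto|]. apply Heq; auto.
    + intros x Hx. apply (Heq B0 HB0 Habs0).
      apply omega_closed. intros eps He. destruct (Hx eps He) as [y [Hy Hd]].
      exists y. split; auto. apply Heq; auto.
Qed.
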